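(* Let $W$ be a finite set, $\mathtt{N}=\{N_1,\ldots,N_r\}$ a sequence of subsets of $W$, and $w\in W$. Then $$\mathrm{lk}_{K(\mathtt{N})}(w)=K(\mathtt{N}_w),\qquad\mathrm{dl}_{K(\mathtt{N})}(w)=K(\widehat{\mathtt{N}}_w)*\Delta^{A_w}.$$
   Context: For a sequence $\mathtt{N}=\{N_1,\ldots,N_r\}$ of subsets of a finite ground set $W$ (repetitions allowed), choose distinct points $a_1,\ldots,a_r\notin W$, set $\widetilde{N}_i=N_i\sqcup\{a_i\}$; $K(\mathtt{N})$ is the simplicial complex on $W\sqcup\{a_1,\ldots,a_r\}$ whose minimal non-faces are exactly $\widetilde{N}_1,\ldots,\widetilde{N}_r$. Define $\mathtt{N}_w=\{N_i-\{w\}\mid i=1,\ldots,r\}$ and $\widehat{\mathtt{N}}_w=\{N_i\mid w\notin N_i\}$, both with ground set $W-\{w\}$, and $A_w=\{a_i\mid w\in N_i\}$; in forming $K(\mathtt{N}_w)$ and $K(\widehat{\mathtt{N}}_w)$ the new point attached to (the set coming from) $N_i$ is the same $a_i$. $\mathrm{lk}_K(w)=\{\tau\in K\mid w\notin\tau,\ \tau\cup\{w\}\in K\}$ and $\mathrm{dl}_K(w)=\{\tau\in K\mid w\notin\tau\}$; $\Delta^S$ is the full simplex on $S$ and $*$ is the join. *)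

(* Defs.v *)
From mathcomp Require Import all_boot.
Set Implicit Arguments. Unset Strict Implicit. Unset Printing Implicit Defensive.

(* K(N) for the family (N_i)_{i in I} on ground set W, with new points a_i:
   the complex on W ⊔ {a_i | i in I} whose minimal non-faces are
   Ñ_i = N_i ⊔ {a_i}; i.e. faces are the subsets of the vertex set
   containing no Ñ_i. The index set I allows subfamilies (as for N̂_w)
   while keeping the same attached point a_i. *)
Definition Kcx (T : finType) (r : nat) (W : {set T}) (I : {set 'I_r})
    (a : 'I_r -> T) (N : 'I_r -> {set T}) : {set {set T}} :=
  [set s : {set T} | (s \subset W :|: a @: I) &&
     [forall i in I, ~~ (a i |: N i \subset s)]].

Definition link (T : finType) (K : {set {set T}}) (w : T) : {set {set T}} :=
  [set t in K | (w \notin t) && (w |: t \in K)].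

Definition deletion (T : finType) (K : {set {set T}}) (w : T) : {set {set T}} :=
  [set t in K | w \notin t].

Definition join (T : finType) (K L : {set {set T}}) : {set {set T}} :=
  [set s :|: t | s in K, t in L].

Definition full_simplex (T : finType) (S : {set T}) : {set {set T}} :=
  powerset S.

(* Main.v *)
Require Import Defs.
From mathcomp Require Import all_boot.

Theorem lemma4p1 (T : finType) (W : {set T}) (r : nat)
    (N : 'I_r -> {set T}) (a : 'I_r -> T) (w : T)
    (HN : forall i, N i \subset W)
    (Ha_inj : injective a) (Ha_out : forall i, a i \notin W)
    (Hw : w \in W) :
  link (Kcx W [set: 'I_r] a N) w
    = Kcx (W :\ w) [set: 'I_r] a (fun i => N i :\ w)
  /\
  deletion (Kcx W [set: 'I_r] a N) w
    = join (Kcx (W :\ w) [set i | w \notin N i] a N)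
           (full_simplex (a @: [set i | w \in N i])).
Proof.
have wA : forall X : {set 'I_r}, w \notin a @: X.
  by move=> X; apply/negP => /imsetP [i _ ei]; move: (Ha_out i); rewrite -ei Hw.
have aN : forall i j, a i \notin N j.
  by move=> i j; apply/negP => /(subsetP (HN j)); rewrite (negbTE (Ha_out i)).
have aw : forall i, a i != w.
  by move=> i; apply/eqP => ei; move: (Ha_out i); rewrite ei Hw.
split.
- apply/setP => t; rewrite !inE; apply/idP/idP.
  + case/and3P => /andP [tsub /forallP Hall] wt /andP [wtsub /forallP Hall2].
    apply/andP; split.
      apply/subsetP => x xt; move: (subsetP tsub x xt); rewrite !inE.
      case/orP => xin; last by rewrite xin orbT.
      by rewrite xin andbT; apply/orP; left; apply/eqP => ex; move: wt; rewrite -ex xt.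
    apply/forallP => i; apply/implyP => _; apply/negP => sub.
    move: (Hall2 i); rewrite inE /= => /negP; apply; apply/subsetP => x.
    rewrite !inE => /orP [/eqP -> | xN]; first by rewrite (subsetP sub) ?orbT // !inE eqxx.
    case: (eqVneq x w) => [->|xw]; first by [].
    by rewrite (subsetP sub) ?orbT // !inE xw xN orbT.
  + case/andP => tsub /forallP Hall.
    have wt : w \notin t.
      apply/negP => /(subsetP tsub); rewrite !inE eqxx /= => /imsetP [i _ ei].
      by move: (aw i); rewrite ei eqxx.
    have tsub' : t \subset W :|: a @: [set: 'I_r].
      apply/subsetP => x /(subsetP tsub); rewrite !inE.
      by case/orP => [/andP [_ ->]|->]; rewrite ?orbT.
    have noN : forall i, ~~ (a i |: N i \subset w |: t).
      move=> i; apply/negP => sub; move: (Hall i); rewrite inE /= => /negP; apply.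
      apply/subsetP => x; rewrite !inE => /orP [/eqP ->|/andP [xw xN]].
        by move: (subsetP sub (a i)); rewrite !inE eqxx (negbTE (aw i)) /=; apply.
      by move: (subsetP sub x); rewrite !inE xN orbT (negbTE xw) /=; apply.
    rewrite tsub' wt /=; apply/andP; split.
      apply/forallP => i; apply/implyP => _; apply/negP => sub.
      by move/negP: (noN i); apply; apply: (subset_trans sub); apply: subsetUr.
    apply/andP; split.
      by apply/subsetP => x; rewrite !inE => /orP [/eqP ->|/(subsetP tsub')]; rewrite ?Hw // inE.
    by apply/forallP => i; apply/implyP => _; apply: noN.
- rewrite /join; apply/setP => t; rewrite inE; apply/idP/idP.
  + case/andP; rewrite inE => /andP [tsub /forallP Hall] wt.
    apply/imset2P; exists (t :&: (W :\ w :|: a @: [set i | w \notin N i])) (t :&: a @: [set i | w \in N i]).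
    * rewrite inE subsetIr /=; apply/forallP => i; apply/implyP => _; apply/negP => sub.
      by move: (Hall i); rewrite inE /= => /negP; apply; apply: (subset_trans sub); apply: subsetIl.
    * by rewrite /full_simplex powersetE subsetIr.
    * apply/setP => x; rewrite !inE; case xt: (x \in t) => //=; symmetry.
      case/setUP: (subsetP tsub x xt) => [xW|/imsetP [j _ ->]].
        by rewrite xW andbT; apply/orP; left; apply/orP; left; apply/eqP => ex; move: wt; rewrite -ex xt.
      case: (boolP (w \in N j)) => h.
        by apply/orP; right; apply: imset_f; rewrite inE h.
      by apply/orP; left; apply/orP; right; apply: imset_f; rewrite inE h.
  + case/imset2P => s u; rewrite inE => /andP [ssub /forallP Hs].
    rewrite /full_simplex powersetE => usub ->.
    have wsu : w \notin s :|: u.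
      rewrite inE; apply/negP => /orP [/(subsetP ssub)|/(subsetP usub)]; last by apply/negP.
      by rewrite !inE eqxx /= (negbTE (wA _)).
    rewrite wsu andbT inE; apply/andP; split.
      rewrite subUset; apply/andP; split.
        apply: (subset_trans ssub); apply: setUSS; [exact: subD1set | apply: imsetS; exact: subsetT].
      apply: (subset_trans usub); apply: subset_trans (subsetUr _ _); apply: imsetS; exact: subsetT.
    apply/forallP => i; apply/implyP => _; apply/negP => sub.
    case: (boolP (w \in N i)) => h.
      by move/negP: wsu; apply; apply: (subsetP sub); rewrite !inE h orbT.
    move: (Hs i); rewrite inE h /= => /negP; apply; apply/subsetP => x xin.
    case/setUP: (subsetP sub x xin) => // /(subsetP usub) /imsetP [j jJ ej].
    move: xin; rewrite !inE ej => /orP [/eqP /Ha_inj eji|xN].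
      by move: jJ; rewrite inE eji (negbTE h).
    by move: (aN j i); rewrite xN.
Qed.
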